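(* Let $k$ be a field of characteristic zero, $G$ a group, $X$ a right $G$-set and $A\neq0$ a strongly $G$-graded $k$-algebra. The following are equivalent: (1) the functor $kX\otimes-:\mathcal M_A\to\mathrm{gr}\text{-}(G,X,A)$ is separable; (2) $X$ contains a nonempty finite $G$-subset; (3) there exists $x\in X$ whose $G$-orbit is finite.
   Context: $A=\bigoplus_{g\in G}A_g$ with $A_gA_h=A_{gh}$ for all $g,h$ (strongly graded), $1\in A_1$. $\mathrm{gr}\text{-}(G,X,A)$ is the category of right $A$-modules $M=\bigoplus_{x\in X}M_x$ with $M_xA_g\subseteq M_{x\cdot g}$, morphisms graded $A$-linear maps. The functor $kX\otimes-$ sends $N$ to $kX\otimes N$ with $(kX\otimes N)_x=x\otimes N$ and $(x\otimes n)a_g=x\cdot g\otimes na_g$ for $a_g\in A_g$. A $G$-subset of $X$ is a subset closed under the action of $G$. A functor is separable if $\mathrm{Hom}(M,N)\to\mathrm{Hom}(FM,FN)$ has a left inverse natural in $M,N$. *)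

(* Defs.v *)
From HB Require Import structures.
From mathcomp Require Import all_boot all_algebra.
From mathcomp Require Import monoid.
From Stdlib Require Import List.
Set Implicit Arguments. Unset Strict Implicit. Unset Printing Implicit Defensive.
Import GRing.Theory.
Local Open Scope ring_scope.

(* Conventions:
   - groups: MathComp [groupType] (boot/monoid.v), product [*%g], unit [1%g];
   - right G-sets: a type [X] with [act : X -> G -> X];
   - a G-grading of a k-algebra A: a family of predicates [Ag : G -> A -> Prop];
   - right A-modules: [lmodType A^c] (left modules over the opposite ring). *)

Section Defs.
Variable G : groupType.

Definition is_right_action (X : Type) (act : X -> G -> X) : Prop :=
  (forall x, act x 1%g = x) /\ (forall x g h, act (act x g) h = act x (g * h)%g).

Definition G_subset (X : Type) (act : X -> G -> X) (Y : X -> Prop) : Prop :=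
  forall y g, Y y -> Y (act y g).
Definition finite_set (X : Type) (Y : X -> Prop) : Prop :=
  exists s : list X, forall y, Y y -> In y s.
Definition G_orbit (X : Type) (act : X -> G -> X) (x : X) : X -> Prop :=
  fun y => exists g, y = act x g.

Variable k : fieldType.
Variable A : algType k.

(* A = \bigoplus_{g in G} A_g as k-vector spaces *)
Definition is_G_grading (Ag : G -> A -> Prop) : Prop :=
  [/\ (forall g, Ag g 0),
      (forall g a b, Ag g a -> Ag g b -> Ag g (a + b)),
      (forall g (c : k) a, Ag g a -> Ag g (c *: a)),
      (forall a : A, exists (s : list G) (f : G -> A),
          NoDup s /\ (forall g, In g s -> Ag g (f g)) /\ a = \sum_(g <- s) f g) &
      (forall (s : list G) (f : G -> A),
          NoDup s -> (forall g, In g s -> Ag g (f g)) -> \sum_(g <- s) f g = 0 ->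
          forall g, In g s -> f g = 0)].

(* strongly graded: A_g A_h = A_{gh} (product of subspaces = span of products), 1 in A_1 *)
Definition strongly_graded (Ag : G -> A -> Prop) : Prop :=
  [/\ is_G_grading Ag,
      (forall g h a b, Ag g a -> Ag h b -> Ag (g * h)%g (a * b)),
      (forall g h c, Ag (g * h)%g c -> exists s : list (A * A),
          (forall p, In p s -> Ag g p.1 /\ Ag h p.2) /\ c = \sum_(p <- s) p.1 * p.2) &
      Ag 1%g 1].

Variable X : Type.
Variable act : X -> G -> X.

(* the underlying module of kX (x) N = \bigoplus_{x in X} x (x) N,
   realised as finitely supported functions X -> N (u x = component in x (x) N) *)
Definition fsupp (N : zmodType) (u : X -> N) : Prop :=
  exists s : list X, forall x, ~ In x s -> u x = 0.

Record kXt (N : zmodType) := KXt { kXval :> X -> N ; kXvalP : fsupp kXval }.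

Lemma fsupp_add (N : zmodType) (u v : kXt N) : fsupp (fun x => u x + v x).
Proof.
case: u => u [s Hs]; case: v => v [t Ht]; exists (s ++ t) => x Hx /=.
rewrite Hs ?Ht ?addr0 // => H; apply: Hx; apply: in_or_app; tauto.
Qed.
Definition kXadd (N : zmodType) (u v : kXt N) : kXt N := KXt (fsupp_add u v).

Hypothesis actP : is_right_action act.

Lemma fsupp_hact (N : lmodType A^c) (u : kXt N) (g : G) (a : A) :
  fsupp (fun y => (a : A^c) *: u (act y g^-1%g)).
Proof.
case: u => u [s Hs]; exists (map (fun x => act x g) s) => y Hy /=.
rewrite Hs ?scaler0 // => H; apply: Hy.
have -> : y = act (act y g^-1%g) g by case: actP => a1 a2; rewrite a2 mulVg a1.
exact: in_map.
Qed.

(* (x (x) n) a_g = x.g (x) n a_g,  i.e. (u a_g)(y) = u(y.g^-1) a_g *)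
Definition kXhact (N : lmodType A^c) (u : kXt N) (g : G) (a : A) : kXt N :=
  KXt (fsupp_hact u g a).

Lemma fsupp_map (M N : lmodType A^c) (f : {linear M -> N}) (u : kXt M) :
  fsupp (fun x => f (u x)).
Proof. case: u => u [s Hs]; exists s => x Hx /=; by rewrite Hs ?linear0. Qed.
Definition kXmap (M N : lmodType A^c) (f : {linear M -> N}) (u : kXt M) : kXt N :=
  KXt (fsupp_map f u).

Variable Ag : G -> A -> Prop.

(* morphisms kX (x) M -> kX (x) N in gr-(G,X,A): additive, compatible with the
   action of homogeneous elements (hence A-linear), preserving the X-grading *)
Definition is_gr_hom (M N : lmodType A^c) (phi : kXt M -> kXt N) : Prop :=
  [/\ (forall u v y, phi (kXadd u v) y = phi u y + phi v y),
      (forall g a, Ag g a -> forall u y, phi (kXhact u g a) y = kXhact (phi u) g a y) &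
      (forall (x : X) (u : kXt M), (forall y, y <> x -> u y = 0) -> forall y, y <> x -> phi u y = 0)].

Definition gr_hom (M N : lmodType A^c) := {phi : kXt M -> kXt N | is_gr_hom phi}.

Definition kX_separable : Prop :=
  exists P : forall M N : lmodType A^c, gr_hom M N -> {linear M -> N},
    (forall (M N : lmodType A^c) (f : {linear M -> N}) (phi : gr_hom M N),
        (forall u, proj1_sig phi u = kXmap f u) -> forall m, P M N phi m = f m)
 /\ (forall (M M' N N' : lmodType A^c) (f : {linear M' -> M}) (g : {linear N -> N'})
        (phi : gr_hom M N) (psi : gr_hom M' N'),
        (forall u, proj1_sig psi u = kXmap g (proj1_sig phi (kXmap f u))) ->
        forall m, P M' N' psi m = g (P M N phi (f m))).

End Defs.

(* Main.v *)
Require Import Defs.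
From HB Require Import structures.
From mathcomp Require Import all_boot all_algebra.
From mathcomp Require Import monoid.
From Stdlib Require Import List.
From mathcomp Require Import boolp.
From Stdlib Require Import Permutation.
Local Open Scope ring_scope.
Import GRing.Theory.
Set Implicit Arguments. Unset Strict Implicit. Unset Printing Implicit Defensive.

Definition asb (P : Prop) : bool := if pselect P then true else false.
Lemma asbE (P : Prop) : asb P = true <-> P.
Proof. by rewrite /asb; case: pselect. Qed.
Definition deq (T : Type) (x y : T) : {x = y} + {x <> y} := pselect (x = y).

Section Sums.
Variables (T : Type) (N : zmodType).
Implicit Types (F : T -> N) (l : list T).

Lemma sum_perm F l l' : Permutation l l' -> \sum_(x <- l) F x = \sum_(x <- l') F x.
Proof.
elim=> [|x l1 l2 _ IH|x y l1|l1 l2 l3 _ IH1 _ IH2] //.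
- by rewrite !big_cons IH.
- by rewrite !big_cons addrCA.
- by rewrite IH1 IH2.
Qed.

Lemma sum_eq_in F F' l : (forall x, In x l -> F x = F' x) ->
  \sum_(x <- l) F x = \sum_(x <- l) F' x.
Proof.
elim: l => [|x l IH] H; first by rewrite !big_nil.
rewrite !big_cons H /=; last by left.
by rewrite IH // => y Hy; apply: H; right.
Qed.

Lemma sum_filter0 F (P : T -> Prop) l : (forall x, ~ P x -> F x = 0) ->
  \sum_(x <- l) F x = \sum_(x <- List.filter (fun x => asb (P x)) l) F x.
Proof.
move=> H; elim: l => [|x l IH] //=.
rewrite big_cons IH; rewrite /asb; case: pselect => Hx.
  by rewrite big_cons.
by rewrite H // add0r.
Qed.

Lemma sum_nodup_eq F l1 l2 : NoDup l1 -> NoDup l2 ->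
  (forall x, F x <> 0 -> In x l1) -> (forall x, F x <> 0 -> In x l2) ->
  \sum_(x <- l1) F x = \sum_(x <- l2) F x.
Proof.
move=> N1 N2 H1 H2.
rewrite (@sum_filter0 F (fun x => In x l2) l1); last first.
  by move=> x Hx; case: (pselect (F x = 0)) => // /H2.
rewrite (@sum_filter0 F (fun x => In x l1) l2); last first.
  by move=> x Hx; case: (pselect (F x = 0)) => // /H1.
apply: sum_perm; apply: NoDup_Permutation; try exact: NoDup_filter.
by move=> x; rewrite !filter_In !asbE; tauto.
Qed.

Lemma sum_const_list (c : N) l : \sum_(x <- l) c = c *+ length l.
Proof. by elim: l => [|x l IH]; rewrite ?big_nil ?big_cons ?IH ?mulrS. Qed.

End Sums.

Lemma exists_nodup (T : Type) (P : T -> Prop) :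
  (exists s : list T, forall y, P y -> In y s) ->
  exists O : list T, NoDup O /\ (forall y, In y O <-> P y).
Proof.
case=> s Hs; exists (nodup (@deq T) (List.filter (fun y => asb (P y)) s)); split.
  exact: NoDup_nodup.
by move=> y; rewrite nodup_In filter_In asbE; split=> [[]|Py] //; split=> //; apply: Hs.
Qed.

Section KX.
Variable X : Type.

Lemma kXt_eq (N : zmodType) (u v : kXt X N) : (forall x, u x = v x) -> u = v.
Proof.
case: u => u Hu; case: v => v Hv /= H.
have E : u = v by apply: funext.
subst v; congr KXt; exact: Prop_irrelevance.
Qed.

Definition dlt (N : zmodType) (x : X) (m : N) : X -> N :=
  fun y => if pselect (y = x) then m else 0.
Lemma fsupp_dlt (N : zmodType) x (m : N) : fsupp (dlt x m).
Proof. by exists (x :: nil) => y Hy; rewrite /dlt; case: pselect => // E; case: Hy; left. Qed.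
Definition kdlt (N : zmodType) x (m : N) : kXt X N := KXt (fsupp_dlt x m).
Lemma kdltE (N : zmodType) x (m : N) y : kdlt x m y = if pselect (y = x) then m else 0.
Proof. by []. Qed.
Lemma kdlt_same (N : zmodType) x (m : N) : kdlt x m x = m.
Proof. by rewrite kdltE; case: pselect. Qed.

Definition slist (N : zmodType) (u : kXt X N) : list X :=
  nodup (@deq X) (proj1_sig (cid (kXvalP u))).
Lemma slist_nodup (N : zmodType) (u : kXt X N) : NoDup (slist u).
Proof. exact: NoDup_nodup. Qed.
Lemma slistP (N : zmodType) (u : kXt X N) x : u x <> 0 -> In x (slist u).
Proof.
rewrite /slist nodup_In; case: (cid _) => s Hs /= Hx.
by case: (pselect (In x s)) => // /Hs.
Qed.
End KX.

Definition mkLin (R : pzRingType) (M N : lmodType R) (f : M -> N) (H : linear f) : {linear M -> N} :=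
  HB.pack f (GRing.isLinear.Build _ _ _ _ f H).
Lemma mkLinE (R : pzRingType) (M N : lmodType R) (f : M -> N) (H : linear f) m :
  @mkLin R M N f H m = f m.
Proof. by []. Qed.

Section Act.
Variables (G : groupType) (X : Type) (act : X -> G -> X).
Hypothesis actP : is_right_action act.
Lemma actK g : cancel (act^~ g) (act^~ g^-1%g).
Proof. by case: actP => a1 a2 x /=; rewrite a2 mulgV a1. Qed.
Lemma actKV g : cancel (act^~ g^-1%g) (act^~ g).
Proof. by case: actP => a1 a2 x /=; rewrite a2 mulVg a1. Qed.
Lemma act_inj g : injective (act^~ g).
Proof. exact: can_inj (actK g). Qed.
End Act.

Section Dir1.
Variables (G : groupType) (k : fieldType) (A : algType k) (X : Type) (act : X -> G -> X).
Hypothesis actP : is_right_action act.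
Variable Ag : G -> A -> Prop.
Hypothesis grad : is_G_grading Ag.
Variable O : list X.
Hypothesis O_nodup : NoDup O.
Hypothesis O_closed : forall x g, In x O -> In (act x g) O.
Variable c : A.
Hypothesis c_central : forall a, c * a = a * c.
Hypothesis c_n : c *+ length O = 1.

Lemma O_perm g : Permutation O (map (act^~ g) O).
Proof.
apply: NoDup_Permutation => //.
  apply: FinFun.Injective_map_NoDup => //; move=> x y; exact: act_inj actP g x y.
move=> x; rewrite in_map_iff; split.
  by move=> Hx; exists (act x g^-1%g); rewrite (actKV actP); split=> //; apply: O_closed.
by case=> y [<- Hy]; apply: O_closed.
Qed.

Lemma sum_O_act (N : zmodType) (F : X -> N) g :
  \sum_(x <- O) F (act x g) = \sum_(x <- O) F x.
Proof. by rewrite -(big_map (act^~ g) xpredT) -(sum_perm _ (O_perm g)). Qed.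

Section Pf.
Variables (M N : lmodType A^c) (phi : gr_hom actP Ag M N).
Definition Pf (m : M) : N := (c : A^c) *: \sum_(x <- O) (proj1_sig phi (kdlt x m)) x.

Lemma Pf_add m m' : Pf (m + m') = Pf m + Pf m'.
Proof.
case: (proj2_sig phi) => H1 H2 H3.
rewrite /Pf -scalerDr -big_split /=; congr (_ *: _); apply: eq_bigr => x _.
rewrite -H1; congr (proj1_sig phi _ x); apply: kXt_eq => y /=.
rewrite /dlt; case: pselect => H; rewrite ?addr0 //.
Qed.

Lemma Pf0 : Pf 0 = 0.
Proof. by apply: (addrI (Pf 0)); rewrite -Pf_add !addr0. Qed.

Lemma Pf_sum (I : Type) (s : list I) (F : I -> M) :
  Pf (\sum_(i <- s) F i) = \sum_(i <- s) Pf (F i).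
Proof. by elim: s => [|i s IH]; rewrite ?big_nil ?Pf0 // !big_cons Pf_add IH. Qed.

Lemma Pf_hom g (a : A) m : Ag g a -> Pf ((a : A^c) *: m) = (a : A^c) *: Pf m.
Proof.
case: (proj2_sig phi) => H1 H2 H3 Ha.
have E x : kdlt x ((a : A^c) *: m) = kXhact actP (kdlt (act x g^-1%g) m) g a.
  apply: kXt_eq => y /=; rewrite /dlt; case: pselect => [Hyx|Hyx].
    by subst y; case: pselect.
  by case: pselect => [/(act_inj actP) //|H]; rewrite scaler0.
rewrite /Pf.
under eq_bigr => x _ do rewrite E (H2 _ _ Ha) /=.
rewrite -scaler_sumr (sum_O_act (fun y => proj1_sig phi (kdlt y m) y)).
rewrite !scalerA; congr (_ *: _). exact: (esym (c_central a)).
Qed.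

Lemma Pf_scale (a : A) m : Pf ((a : A^c) *: m) = (a : A^c) *: Pf m.
Proof.
case: grad => _ _ _ Hdec _.
have [s [f [_ [Hf ->]]]] := Hdec a.
rewrite (scaler_suml (R := A^c)) Pf_sum (scaler_suml (R := A^c)).
by apply: sum_eq_in => g Hg; apply: Pf_hom (Hf g Hg).
Qed.

Lemma Pf_linear : linear Pf.
Proof. by move=> a u v; rewrite Pf_add Pf_scale. Qed.
End Pf.

Lemma dir1 : kX_separable actP Ag.
Proof.
exists (fun M N phi => mkLin (Pf_linear phi)); split.
- move=> M N f phi Hphi m; rewrite mkLinE /Pf.
  have -> : \sum_(x <- O) proj1_sig phi (kdlt x m) x = \sum_(x <- O) f m.
    by apply: eq_bigr => x _; rewrite Hphi /= /dlt; case: pselect.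
  rewrite sum_const_list -scalerMnr scalerMnl.
  have -> : (c : A^c) *+ length O = 1 by exact: c_n.
  by rewrite scale1r.
- move=> M M' N N' f g phi psi Hpsi m; rewrite !mkLinE /Pf.
  under eq_bigr => x _ do rewrite Hpsi /=.
  have E x : kXmap f (kdlt x m) = kdlt x (f m).
    by apply: kXt_eq => y /=; rewrite /dlt; case: pselect => H; rewrite ?linear0.
  under eq_bigr => x _ do rewrite E.
  by rewrite -linear_sum linearZ.
Qed.
End Dir1.

Section DecS.
Variables (G : groupType) (k : fieldType) (A : algType k).
Variable Ag : G -> A -> Prop.
Hypothesis grad : is_G_grading Ag.

Definition isdec (a : A) (t : list G) (f : G -> A) :=
  NoDup t /\ (forall g, In g t -> Ag g (f g)) /\ a = \sum_(g <- t) f g.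

Lemma dec_ex a : exists p : list G * (G -> A), isdec a p.1 p.2.
Proof.
case: grad => _ _ _ H _; have [s [f Hsf]] := H a; by exists (s, f).
Qed.
Definition decp a := proj1_sig (cid (dec_ex a)).
Lemma decpP a : isdec a (decp a).1 (decp a).2.
Proof. exact: (proj2_sig (cid (dec_ex a))). Qed.

Definition Dec (W : zmodType) (Phi : G -> A -> W) (a : A) : W :=
  \sum_(g <- (decp a).1) Phi g ((decp a).2 g).

Definition ext (t : list G) (f : G -> A) g := if pselect (In g t) then f g else 0.

Lemma Ag0 g : Ag g 0. Proof. by case: grad. Qed.
Lemma AgD g a b : Ag g a -> Ag g b -> Ag g (a + b). Proof. by case: grad => _ H _ _ _; apply: H. Qed.
Lemma AgB g a b : Ag g a -> Ag g b -> Ag g (a - b).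
Proof.
case: grad => _ _ HZ _ _ Ha Hb; apply: AgD => //.
by rewrite -scaleN1r; apply: HZ.
Qed.

Section Phi.
Variables (W : zmodType) (Phi : G -> A -> W).
Hypothesis PhiD : forall g x y, Phi g (x + y) = Phi g x + Phi g y.
Lemma Phi0 g : Phi g 0 = 0.
Proof. by apply: (addrI (Phi g 0)); rewrite -PhiD !addr0. Qed.

Lemma sum_ext (l U : list G) (f : G -> A) : NoDup l -> NoDup U ->
  (forall g, In g l -> In g U) ->
  \sum_(g <- l) Phi g (f g) = \sum_(g <- U) Phi g (ext l f g).
Proof.
move=> Nl NU lU.
rewrite (@sum_eq_in _ _ (fun g => Phi g (f g)) (fun g => Phi g (ext l f g))); last first.
  by move=> g Hg; rewrite /ext; case: pselect.
apply: sum_nodup_eq => // g; rewrite /ext; case: pselect => //= Hn; rewrite ?Phi0 //; by move=> _; apply: lU.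
Qed.
End Phi.

Lemma sum_ext_id (l U : list G) (f : G -> A) : NoDup l -> NoDup U ->
  (forall g, In g l -> In g U) ->
  \sum_(g <- l) f g = \sum_(g <- U) ext l f g.
Proof. exact: (@sum_ext A (fun _ x => x)). Qed.

Lemma ext_dec a l f U : isdec a l f -> NoDup U -> (forall g, In g l -> In g U) ->
  isdec a U (ext l f).
Proof.
move=> [Nl [Hl ->]] NU lU; split=> //; split; last exact: sum_ext_id.
by move=> g _; rewrite /ext; case: pselect => [/Hl|Hn] //; apply: Ag0.
Qed.

Section Phi2.
Variables (W : zmodType) (Phi : G -> A -> W).
Hypothesis PhiD : forall g x y, Phi g (x + y) = Phi g x + Phi g y.

Lemma DecE a t f : isdec a t f -> Dec Phi a = \sum_(g <- t) Phi g (f g).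
Proof.
move=> Hd; have Hs := decpP a.
set s := (decp a).1 in Hs *; set fs := (decp a).2 in Hs *.
rewrite /Dec -/s -/fs.
set U := nodup (@deq G) (s ++ t).
have NU : NoDup U by exact: NoDup_nodup.
have sU g : In g s -> In g U by move=> H; rewrite nodup_In; apply: in_or_app; left.
have tU g : In g t -> In g U by move=> H; rewrite nodup_In; apply: in_or_app; right.
have [N1 [H1 E1]] := ext_dec Hs NU sU.
have [N2 [H2 E2]] := ext_dec Hd NU tU.
case: Hs => Ns _; case: Hd => Nt _.
rewrite (sum_ext PhiD _ Ns NU sU) (sum_ext PhiD _ Nt NU tU).
apply: sum_eq_in => g Hg; congr (Phi g _).
case: grad => _ _ _ _ Hind.
apply/eqP; rewrite -subr_eq0; apply/eqP.
apply: (Hind U (fun g => ext s fs g - ext t f g)) => //.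
  by move=> h Hh; apply: AgB; [apply: H1|apply: H2].
by rewrite sumrB -E1 -E2 subrr.
Qed.
End Phi2.

Lemma Dec0 (W : zmodType) (Phi : G -> A -> W) :
  (forall g x y, Phi g (x + y) = Phi g x + Phi g y) -> Dec Phi 0 = 0.
Proof.
move=> PhiD; rewrite (@DecE _ _ PhiD 0 nil (fun _ => 0)) ?big_nil //.
by split; [exact: NoDup_nil|split=> [g []|]; rewrite big_nil].
Qed.

Lemma DecD (W : zmodType) (Phi : G -> A -> W) :
  (forall g x y, Phi g (x + y) = Phi g x + Phi g y) ->
  forall a b, Dec Phi (a + b) = Dec Phi a + Dec Phi b.
Proof.
move=> PhiD a b.
have Ha := decpP a; have Hb := decpP b.
set U := nodup (@deq G) ((decp a).1 ++ (decp b).1).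
have NU : NoDup U by exact: NoDup_nodup.
have aU g : In g (decp a).1 -> In g U by move=> H; rewrite nodup_In; apply: in_or_app; left.
have bU g : In g (decp b).1 -> In g U by move=> H; rewrite nodup_In; apply: in_or_app; right.
have Ha' := ext_dec Ha NU aU; have Hb' := ext_dec Hb NU bU.
rewrite (DecE PhiD Ha') (DecE PhiD Hb').
rewrite (@DecE _ _ PhiD _ U (fun g => ext (decp a).1 (decp a).2 g + ext (decp b).1 (decp b).2 g)).
  by rewrite -big_split /=; apply: eq_bigr => g _; rewrite PhiD.
case: Ha' => _ [Ha1 Ea]; case: Hb' => _ [Hb1 Eb].
split=> //; split; first by move=> g Hg; apply: AgD; [apply: Ha1|apply: Hb1].
by rewrite big_split /= -Ea -Eb.
Qed.

Lemma Dec_id a : Dec (fun _ x => x) a = a.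
Proof. by case: (decpP a) => _ [_ E]; rewrite /Dec -E. Qed.

End DecS.

Section VS.
Variables (k : fieldType) (A : algType k) (X : Type).

Definition V := kXt X A.
HB.instance Definition _ := gen_eqMixin V.
HB.instance Definition _ := gen_choiceMixin V.

Lemma fsupp0 : fsupp (fun _ : X => (0 : A)). Proof. by exists nil. Qed.
Lemma fsuppN (u : V) : fsupp (fun x => - (u x : A)).
Proof. case: u => u [s Hs]; exists s => x Hx /=; by rewrite Hs ?oppr0. Qed.
Lemma fsuppD (u v : V) : fsupp (fun x => (u x : A) + v x).
Proof.
case: u => u [s Hs]; case: v => v [t Ht]; exists (s ++ t) => x Hx /=.
rewrite Hs ?Ht ?addr0 // => H; apply: Hx; apply: in_or_app; tauto.
Qed.
Lemma fsuppZ (a : A) (u : V) : fsupp (fun x => (u x : A) * a).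
Proof. case: u => u [s Hs]; exists s => x Hx /=; by rewrite Hs ?mul0r. Qed.

Definition vzero : V := KXt fsupp0.
Definition vopp (u : V) : V := KXt (fsuppN u).
Definition vadd (u v : V) : V := KXt (fsuppD u v).
Definition vscale (a : A^c) (u : V) : V := KXt (fsuppZ a u).

Lemma vaddA : associative vadd.
Proof. by move=> u v w; apply: kXt_eq => x /=; rewrite addrA. Qed.
Lemma vaddC : commutative vadd.
Proof. by move=> u v; apply: kXt_eq => x /=; rewrite addrC. Qed.
Lemma vadd0 : left_id vzero vadd.
Proof. by move=> u; apply: kXt_eq => x /=; rewrite add0r. Qed.
Lemma vaddN : left_inverse vzero vopp vadd.
Proof. by move=> u; apply: kXt_eq => x /=; rewrite addNr. Qed.

HB.instance Definition _ := GRing.isZmodule.Build V vaddA vaddC vadd0 vaddN.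

Lemma vscaleA a b (v : V) : vscale a (vscale b v) = vscale (a * b) v.
Proof. by apply: kXt_eq => x /=; rewrite -mulrA. Qed.
Lemma vscale1 : left_id 1 vscale.
Proof. by move=> u; apply: kXt_eq => x /=; rewrite mulr1. Qed.
Lemma vscaleDr : right_distributive vscale +%R.
Proof. by move=> a u v; apply: kXt_eq => x /=; rewrite mulrDl. Qed.
Lemma vscaleDl (v : V) : {morph vscale^~ v : a b / a + b}.
Proof. by move=> a b; apply: kXt_eq => x /=; rewrite mulrDr. Qed.

HB.instance Definition _ := GRing.Zmodule_isLmodule.Build A^c V vscaleA vscale1 vscaleDr vscaleDl.

Lemma vaddE (u v : V) x : (u + v) x = u x + v x. Proof. by []. Qed.
Lemma vscaleE (a : A^c) (u : V) x : (a *: u) x = (u x : A) * a. Proof. by []. Qed.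
Lemma vsumE (I : Type) (s : list I) (F : I -> V) x :
  (\sum_(i <- s) F i) x = \sum_(i <- s) F i x.
Proof. by elim: s => [|i s IH]; rewrite ?big_nil ?big_cons // vaddE IH. Qed.

Definition vkdlt z (a : A) : V := kdlt z a.
Lemma vkdltE z a y : vkdlt z a y = if pselect (y = z) then a else 0.
Proof. by []. Qed.
Lemma vkdltD z (a b : A) : vkdlt z (a + b) = vkdlt z a + vkdlt z b.
Proof. by apply: kXt_eq => y; rewrite vaddE !vkdltE; case: pselect => H; rewrite ?addr0. Qed.
Lemma vkdltZ z (a : A) (c : A^c) : c *: vkdlt z a = vkdlt z ((a : A) * c).
Proof. by apply: kXt_eq => y; rewrite vscaleE !vkdltE; case: pselect => H; rewrite ?mul0r. Qed.

Definition M0 := (A^c)^o.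

Definition eps (u : V) : M0 := \sum_(x <- slist u) (u x : A).
Lemma epsE (u : V) L : NoDup L -> (forall x, u x <> 0 -> In x L) ->
  eps u = \sum_(x <- L) (u x : A).
Proof. move=> NL HL; apply: sum_nodup_eq => //; [exact: slist_nodup|exact: slistP]. Qed.

Lemma eps_linear : linear eps.
Proof.
move=> a u v.
set L := nodup (@deq X) (slist u ++ slist v).
have NL : NoDup L by exact: NoDup_nodup.
have HuL x : u x <> 0 -> In x L by move=> Hx; rewrite nodup_In; apply: in_or_app; left; apply: slistP.
have HvL x : v x <> 0 -> In x L by move=> Hx; rewrite nodup_In; apply: in_or_app; right; apply: slistP.
rewrite (epsE NL HuL) (epsE NL HvL) (epsE NL).
  transitivity (\sum_(x <- L) ((u x : A) * a + v x)); first by apply: eq_bigr.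
  by rewrite big_split /= -mulr_suml.
move=> x; rewrite vaddE vscaleE => H.
case: (pselect (u x = 0)) => Hu; last exact: HuL.
by apply: HvL => Hv; apply: H; rewrite Hu Hv mul0r addr0.
Qed.
Definition epsL : {linear V -> M0} := mkLin eps_linear.

Lemma eps_kdlt z (a : A) : eps (vkdlt z a) = a.
Proof.
rewrite (@epsE _ (z :: nil)); first by rewrite big_cons big_nil vkdltE addr0; case: pselect.
  by constructor => //; exact: NoDup_nil.
by move=> x; rewrite vkdltE; case: pselect => // E _; left.
Qed.

Definition lm (c : A) (b : M0) : M0 := (c : A) * (b : A).
Lemma lm_linear c : linear (lm c).
Proof. by move=> a u v; rewrite /lm /= mulrDr mulrA. Qed.
Definition LmL c : {linear M0 -> M0} := mkLin (lm_linear c).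

Lemma id_linear (M : lmodType A^c) : linear (fun x : M => x).
Proof. by []. Qed.
Definition idL (M : lmodType A^c) : {linear M -> M} := mkLin (@id_linear M).

End VS.

Lemma sum_In0 (T : Type) (N : zmodType) (F : T -> N) l :
  (forall x, In x l -> F x = 0) -> \sum_(x <- l) F x = 0.
Proof. by move=> H; rewrite (@sum_eq_in _ _ F (fun _ => 0)) ?big1. Qed.

Section Gr.
Variables (G : groupType) (k : fieldType) (A : algType k) (X : Type) (act : X -> G -> X).
Hypothesis actP : is_right_action act.
Variable Ag : G -> A -> Prop.

Lemma kXmap_gr (M N : lmodType A^c) (f : {linear M -> N}) : is_gr_hom actP Ag (kXmap f).
Proof.
split.
- by move=> u v y /=; rewrite linearD.
- by move=> g a Ha u y /=; rewrite linearZ.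
- by move=> x u Hu y Hy /=; rewrite Hu // linear0.
Qed.

Lemma comp_gr (M N P : lmodType A^c) (phi : kXt X M -> kXt X N) (psi : kXt X N -> kXt X P) :
  is_gr_hom actP Ag phi -> is_gr_hom actP Ag psi -> is_gr_hom actP Ag (fun u => psi (phi u)).
Proof.
case=> H1 H2 H3 [K1 K2 K3]; split.
- move=> u v y; rewrite -K1; congr (psi _ y); apply: kXt_eq => z; exact: H1.
- move=> g a Ha u y; rewrite -(K2 _ _ Ha); congr (psi _ y); apply: kXt_eq => z; exact: H2.
- move=> x u Hu y Hy; apply: (K3 x (phi u)) Hy => z Hz; exact: H3 x u Hu z Hz.
Qed.
End Gr.

Section Dir2.
Variables (G : groupType) (k : fieldType) (A : algType k) (X : Type) (act : X -> G -> X).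
Hypothesis actP : is_right_action act.
Variable Ag : G -> A -> Prop.
Hypothesis Agr : strongly_graded Ag.
Hypothesis A_nz : (1 : A) != 0.

Let grad : is_G_grading Ag. Proof. by case: Agr. Qed.
Let AgM g h a b : Ag g a -> Ag h b -> Ag (g * h)%g (a * b). Proof. by case: Agr => _ H _ _; apply: H. Qed.

Local Notation V := (V A X).
Local Notation M0 := (M0 A).

Definition Phi (y : X) : G -> A -> V := fun g b => vkdlt (act y g^-1%g) b.
Lemma PhiD y g a b : Phi y g (a + b) = Phi y g a + Phi y g b.
Proof. exact: vkdltD. Qed.

Definition sv (u : kXt X M0) (y : X) : V := Dec grad (Phi y) (u y).
Lemma sv_supp (u : kXt X M0) : fsupp (sv u).
Proof.
exists (slist u) => y Hy; rewrite /sv.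
have -> : u y = 0.
  by case: (pselect (u y = 0)) => // Hn; exfalso; apply: Hy; exact: slistP Hn.
exact: Dec0 (@PhiD y).
Qed.
Definition sfun (u : kXt X M0) : kXt X V := KXt (sv_supp u).

Lemma sfun_gr : is_gr_hom actP Ag sfun.
Proof.
split.
- by move=> u v y /=; rewrite /sv /= (DecD grad (@PhiD y)).
- move=> h c Hc u y /=; rewrite /sv /=.
  set b := u (act y h^-1%g).
  have Hb := decpP grad b.
  set s := (decp grad b).1 in Hb *; set fs := (decp grad b).2 in Hb *.
  have [Ns [Hs Eb]] := Hb.
  have Hd : isdec Ag ((c : A^c) *: (b : M0)) (map (fun g => g * h)%g s) (fun g => fs (g * h^-1)%g * c).
    split; first by apply: FinFun.Injective_map_NoDup => // x1 x2; apply: mulIg.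
    split.
      move=> g; rewrite in_map_iff => -[g' [<- Hg']]; rewrite mulgK.
      exact: AgM (Hs _ Hg') Hc.
    rewrite big_map; under eq_bigr => g _ do rewrite mulgK.
    by rewrite -mulr_suml -Eb.
  rewrite (DecE grad (@PhiD y) Hd) big_map.
  rewrite /Dec -/s -/fs scaler_sumr; apply: eq_bigr => g _.
  rewrite mulgK /Phi vkdltZ; congr vkdlt.
  by case: actP => _ a2; rewrite a2 invgM.
- move=> x u Hu y Hy /=; rewrite /sv Hu //; exact: Dec0 (@PhiD y).
Qed.

Definition sG : gr_hom actP Ag M0 V := exist _ sfun sfun_gr.

Lemma eps_sv (u : kXt X M0) y : eps (sv u y) = u y.
Proof.
rewrite -[eps _]/(epsL A X (sv u y)) /sv /Dec raddf_sum.
rewrite {3}(proj2 (proj2 (decpP grad (u y)))).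
apply: eq_bigr => g _; exact: eps_kdlt.
Qed.

Section Lc.
Variables (h : G) (c : A).
Lemma lc_supp (w : V) : fsupp (fun z => c * (w (act z h) : A)).
Proof.
exists (map (act^~ h^-1%g) (slist w)) => z Hz.
case: (pselect (w (act z h) = 0)) => [->|Hn]; first by rewrite mulr0.
exfalso; apply: Hz; rewrite in_map_iff; exists (act z h); split; first exact: actK.
exact: slistP Hn.
Qed.
Definition lc (w : V) : V := KXt (lc_supp w).
Lemma lc_linear : linear lc.
Proof. by move=> a u v; apply: kXt_eq => z /=; rewrite mulrDr mulrA. Qed.
Definition LcL : {linear V -> V} := mkLin lc_linear.
End Lc.

Lemma sv_lm h c (u : kXt X M0) y : Ag h c ->
  sv (kXmap (LmL c) u) y = lc h c (sv u y).
Proof.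
move=> Hc; rewrite /sv /=.
set b := u y.
have Hb := decpP grad b.
set s := (decp grad b).1 in Hb *; set fs := (decp grad b).2 in Hb *.
have [Ns [Hs Eb]] := Hb.
have Hd : isdec Ag (LmL c b) (map (fun g => h * g)%g s) (fun g => c * fs (h^-1 * g)%g).
  split; first by apply: FinFun.Injective_map_NoDup => // x1 x2; apply: mulgI.
  split.
    move=> g; rewrite in_map_iff => -[g' [<- Hg']]; rewrite mulKg.
    exact: AgM Hc (Hs _ Hg').
  rewrite big_map; under eq_bigr => g _ do rewrite mulKg.
  by rewrite -mulr_sumr -Eb.
rewrite (DecE grad (@PhiD y) Hd) big_map.
apply: kXt_eq => z /=; rewrite vsumE /Dec -/s -/fs vsumE mulr_sumr.
apply: eq_bigr => g _; rewrite mulKg /Phi !vkdltE.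
have E : (z = act y (h * g)^-1%g) <-> (act z h = act y g^-1%g).
  case: actP => _ a2; rewrite invgM -a2; split => [->|<-]; first exact: actKV.
  by rewrite (actK actP).
by case: pselect => H1; case: pselect => H2; rewrite ?mulr0 //; exfalso; tauto.
Qed.

Lemma dir2 : kX_separable actP Ag -> exists x : X, finite_set (G_orbit act x).
Proof.
case=> P [HP1 HP2].
pose s' := sG.
have St1 m : eps (P M0 V s' m) = m.
  pose psi : gr_hom actP Ag M0 M0 := exist _ _ (kXmap_gr actP Ag (idL M0)).
  have E1 := HP1 M0 M0 (idL M0) psi (fun u => erefl) m.
  have E2 := HP2 M0 M0 V M0 (idL M0) (epsL A X) s' psi.
  rewrite -[eps _]/(epsL A X _) -[P _ _ _ m]/(P _ _ _ (idL M0 m)) -E2 ?E1 //.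
  move=> u; apply: kXt_eq => y /=; rewrite -[eps _]/(epsL A X _) /=.
  have -> : kXmap (idL M0) u = u by apply: kXt_eq.
  by rewrite eps_sv.
have St2 h c m : Ag h c -> lc h c (P M0 V s' m) = P M0 V s' (c * (m : A)).
  move=> Hc.
  pose psi : gr_hom actP Ag M0 V :=
    exist _ _ (comp_gr sfun_gr (kXmap_gr actP Ag (LcL h c))).
  have E1 := HP2 M0 M0 V V (idL M0) (LcL h c) s' psi.
  have E2 := HP2 M0 M0 V V (LmL c) (idL V) s' psi.
  transitivity (P M0 V psi m).
    rewrite E1 //.
    by move=> u /=; have -> : kXmap (idL M0) u = u by apply: kXt_eq.
  rewrite E2 //.
  move=> u; apply: kXt_eq => y /=; by rewrite (sv_lm _ _ Hc).
set v := P M0 V s' 1.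
have St3 h c z : Ag h c -> c * (v (act z h) : A) = (v z : A) * c.
  move=> Hc; have H := St2 h c 1 Hc; rewrite mulr1 in H.
  have E : P M0 V s' c = (c : A^c) *: v.
    rewrite -linearZ; congr (P _ _ _ _); by rewrite -[RHS]/((1 : A) * c) mul1r.
  rewrite E in H; have := congr1 (fun w : V => w z) H; rewrite /= => ->.
  by [].
have St4 z g : v z <> 0 -> v (act z g) <> 0.
  move=> Hz Hzg; apply: Hz.
  case: Agr => _ _ H3 H1.
  have : Ag (g * g^-1)%g 1 by rewrite mulgV.
  case/H3 => l [Hl El].
  rewrite -[v z]mulr1 El mulr_sumr sum_In0 // => p Hp.
  case: (Hl p Hp) => Hp1 Hp2.
  by rewrite mulrA -(St3 g p.1 z Hp1) Hzg mulr0 mul0r.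
have : eps v = 1 by exact: St1.
rewrite /eps => Ev.
case: (pselect (exists z, In z (slist v) /\ v z <> 0)) => [[z [Hz Hvz]]|Hn]; last first.
  exfalso; move/eqP: A_nz; apply.
  transitivity (\sum_(x <- slist v) (v x : A)); first exact: (esym Ev).
  apply: sum_In0 => z Hzs.
  by case: (pselect (v z = 0)) => // Hvz; exfalso; apply: Hn; exists z.
exists z; exists (slist v) => y [g ->]; apply: slistP; exact: St4.
Qed.
End Dir2.

Unset Implicit Arguments.

Theorem corollary3p8p4 (k : fieldType) (G : groupType) (X : Type)
  (act : X -> G -> X) (A : algType k) (Ag : G -> A -> Prop)
  (char0 : [pchar k] =i pred0)
  (actP : is_right_action act)
  (Agr : strongly_graded Ag)
  (A_nz : (1 : A) != 0) :
  [/\ (kX_separable actP Ag <-> exists Y : X -> Prop,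
          [/\ G_subset act Y, (exists y, Y y) & finite_set Y]),
      ((exists Y : X -> Prop, [/\ G_subset act Y, (exists y, Y y) & finite_set Y])
          <-> exists x : X, finite_set (G_orbit act x)) &
      (kX_separable actP Ag <-> exists x : X, finite_set (G_orbit act x))].
Proof.
have a1 := proj1 actP; have a2 := proj2 actP.
have E23 : (exists Y : X -> Prop, [/\ G_subset act Y, (exists y, Y y) & finite_set Y])
          <-> exists x : X, finite_set (G_orbit act x).
  split.
    case=> Y [HY [y Hy] [s Hs]]; exists y; exists s => z [g ->]; apply: Hs; exact: HY.
  case=> x Hx; exists (G_orbit act x); split => //.
    by move=> y g [h ->]; exists (h * g)%g; rewrite a2.
  by exists x; exists 1%g; rewrite a1.
have E13 : kX_separable actP Ag <-> exists x : X, finite_set (G_orbit act x).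
  split; first exact: dir2.
  case=> x0 Hx0.
  have [O [NO HO]] := exists_nodup Hx0.
  have Ox0 : In x0 O by apply/HO; exists 1%g; rewrite a1.
  have Ocl : forall x g, In x O -> In (act x g) O.
    by move=> x g /HO [h ->]; apply/HO; exists (h * g)%g; rewrite a2.
  set n := length O.
  have n0 : (n%:R : k) != 0.
    rewrite (proj1 (pcharf0P k) char0); rewrite /n.
    by case: (O) Ox0.
  pose c : A := (n%:R)^-1 *: 1.
  apply: (@dir1 G k A X act actP Ag (let: And4 g _ _ _ := Agr in g) O NO Ocl c).
  - by move=> a; rewrite /c -scalerAl mul1r -scalerAr mulr1.
  - by rewrite /c scalerMnl -mulr_natr mulVf // scale1r.
by split=> //; rewrite E13 E23.
Qed.
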